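(* Let $x,y\in R=\mathbb{K}[[t]]$ with $v(x)=5$, $v(y)=8$, chosen so that $t=y^2/x^3$, and put $z=y/x$. Let $S_2=\langle 1,x,y,x^2,tx^2\rangle+t^{13}R$. For $\alpha,\beta\in\mathbb{K}$ with $\alpha\neq 0$ let $F_9(\alpha,\beta)=\langle 1,\ z+\alpha t z^2+\beta z^3,\ x,\ y\rangle + t^{10}R$. Then each $F_9(\alpha,\beta)$ is an $S_2$-submodule of $R$, and $F_9(\alpha,\beta)\cong F_9(\alpha',\beta')$ as $S_2$-modules (with $\alpha,\alpha'\ne0$) only if $(\alpha,\beta)=(\alpha',\beta')$.
   Context: $\mathbb{K}$ is an algebraically closed field; $v$ denotes the $t$-adic valuation on $R=\mathbb{K}[[t]]$; $\langle a_1,\dots,a_m\rangle$ denotes the $\mathbb{K}$-linear span of $a_1,\dots,a_m$. *)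

(* Defs.v *)
From HB Require Import structures.
From mathcomp Require Import all_boot all_order all_algebra.
Set Implicit Arguments. Unset Strict Implicit. Unset Printing Implicit Defensive.
Import GRing.Theory.
Local Open Scope ring_scope.

(* An element of K[[t]]: f n is the coefficient of t^n. *)
Definition pser (K : Type) := nat -> K.

Section PSer.
Variable K : fieldType.

Definition pzero : pser K := fun _ => 0.
Definition padd (f g : pser K) : pser K := fun n => f n + g n.
Definition pscale (c : K) (f : pser K) : pser K := fun n => c * f n.
Definition pmul (f g : pser K) : pser K :=
  fun n => \sum_(i < n.+1) f i * g (n - i)%N.
Definition pconst (c : K) : pser K := fun n => if n == 0%N then c else 0.
Definition ptpow (k : nat) : pser K := fun n => if n == k then 1 else 0.
Definition pt : pser K := ptpow 1.

Definition val_eq (f : pser K) (k : nat) : Prop :=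
  (forall i, (i < k)%N -> f i = 0) /\ f k != 0.

Definition lincomb (cs : seq K) (gens : seq (pser K)) : pser K :=
  foldr (fun p acc => padd (pscale p.1 p.2) acc) pzero (zip cs gens).

Definition span_plus (gens : seq (pser K)) (n : nat) (f : pser K) : Prop :=
  exists cs : seq K, size cs = size gens /\
    exists r : pser K, f = padd (lincomb cs gens) (pmul (ptpow n) r).

Definition is_submodule (S F : pser K -> Prop) : Prop :=
  F pzero /\
  (forall a b, F a -> F b -> F (padd a b)) /\
  (forall s m, S s -> F m -> F (pmul s m)).

Definition module_iso (S F F' : pser K -> Prop) : Prop :=
  exists phi : pser K -> pser K,
    (forall m, F m -> F' (phi m)) /\
    (forall a b, F a -> F b -> phi (padd a b) = padd (phi a) (phi b)) /\
    (forall s m, S s -> F m -> phi (pmul s m) = pmul s (phi m)) /\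
    (forall a b, F a -> F b -> phi a = phi b -> a = b) /\
    (forall m', F' m' -> exists m, F m /\ phi m = m').

Definition S2 (x y : pser K) : pser K -> Prop :=
  span_plus [:: pconst 1; x; y; pmul x x; pmul pt (pmul x x)] 13.

Definition F9 (x y z : pser K) (a b : K) : pser K -> Prop :=
  span_plus [:: pconst 1;
                padd z (padd (pscale a (pmul pt (pmul z z)))
                             (pscale b (pmul z (pmul z z))));
                x; y] 10.
End PSer.

(* Main.v *)
Require Import Defs.
From HB Require Import structures.
From mathcomp Require Import all_boot all_order all_algebra.
From mathcomp Require Import ring zify.
From Stdlib Require Import FunctionalExtensionality.
Set Implicit Arguments. Unset Strict Implicit. Unset Printing Implicit Defensive.
Import GRing.Theory.
Local Open Scope ring_scope.

Section Lib.
Variable K : fieldType.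
Implicit Types f g h : pser K.

Lemma coef_pmul_poly f g n N : (n < N)%N ->
  pmul f g n = ((\poly_(i < N) f i) * (\poly_(i < N) g i))`_n.
Proof.
move=> nN; rewrite coefM /pmul; apply: eq_bigr => i _.
rewrite !coef_poly; have hi := ltn_ord i.
rewrite ifT; last by apply: leq_ltn_trans nN; rewrite -ltnS.
rewrite ifT //; apply: leq_ltn_trans nN; exact: leq_subr.
Qed.

Lemma coefM_eq (p p' q q' : {poly K}) n :
  (forall i, (i <= n)%N -> p`_i = p'`_i) -> (forall i, (i <= n)%N -> q`_i = q'`_i) ->
  (p * q)`_n = (p' * q')`_n.
Proof.
move=> hp hq; rewrite !coefM; apply: eq_bigr => i _.
rewrite hp ?hq // ?leq_subr //; by rewrite -ltnS.
Qed.

Lemma pmulC f g : pmul f g = pmul g f.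
Proof.
apply: functional_extensionality => n.
by rewrite !(@coef_pmul_poly _ _ n n.+1) // mulrC.
Qed.

Lemma pmulA f g h : pmul f (pmul g h) = pmul (pmul f g) h.
Proof.
apply: functional_extensionality => n.
rewrite !(@coef_pmul_poly _ _ n n.+1) //.
transitivity (((\poly_(i < n.+1) f i) * ((\poly_(i < n.+1) g i) * (\poly_(i < n.+1) h i)))`_n).
  apply: coefM_eq => // i hi; rewrite coef_poly ltnS hi.
  by apply: coef_pmul_poly; rewrite ltnS.
rewrite mulrA; apply: coefM_eq => // i hi; rewrite coef_poly ltnS hi.
by symmetry; apply: coef_pmul_poly; rewrite ltnS.
Qed.

Lemma pmulDl f g h : pmul (padd f g) h = padd (pmul f h) (pmul g h).
Proof.
apply: functional_extensionality => n.
by rewrite /pmul /padd -big_split; apply: eq_bigr => i _; rewrite mulrDl.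
Qed.

Lemma pmulDr f g h : pmul h (padd f g) = padd (pmul h f) (pmul h g).
Proof. by rewrite pmulC pmulDl !(pmulC h). Qed.

Lemma pmulZl c f g : pmul (pscale c f) g = pscale c (pmul f g).
Proof.
apply: functional_extensionality => n.
by rewrite /pmul /pscale mulr_sumr; apply: eq_bigr => i _; rewrite mulrA.
Qed.

Lemma pmulZr c f g : pmul g (pscale c f) = pscale c (pmul g f).
Proof. by rewrite pmulC pmulZl pmulC. Qed.

Lemma pmul0l f : pmul (pzero K) f = pzero K.
Proof.
apply: functional_extensionality => n.
by rewrite /pmul /pzero big1 // => i _; rewrite mul0r.
Qed.

Lemma pmul0r f : pmul f (pzero K) = pzero K.
Proof. by rewrite pmulC pmul0l. Qed.

Lemma pmul1l f : pmul (pconst 1) f = f.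
Proof.
apply: functional_extensionality => n.
rewrite /pmul big_ord_recl /= /pconst /= mul1r subn0 big1 ?addr0 // => i _.
by rewrite /= mul0r.
Qed.

Lemma pmul1r f : pmul f (pconst 1) = f.
Proof. by rewrite pmulC pmul1l. Qed.

Lemma ptpowE k f n : pmul (ptpow K k) f n = if (k <= n)%N then f (n - k)%N else 0.
Proof.
rewrite /pmul /ptpow; case: leqP => hk.
  rewrite (bigD1 (Ordinal (leq_ltn_trans hk (ltnSn n)))) //= eqxx mul1r big1 ?addr0 //.
  move=> i /eqP hi; rewrite ifF ?mul0r //; apply/negP => /eqP e; apply: hi.
  by apply: val_inj.
rewrite big1 // => i _; rewrite ifF ?mul0r //; apply/negP => /eqP e.
by move: (ltn_ord i); rewrite e ltnS leqNgt hk.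
Qed.

Lemma ptE f n : pmul (pt K) f n = if n is m.+1 then f m else 0.
Proof. by rewrite /pt ptpowE; case: n => // n; rewrite subn1. Qed.

Definition vanish f k := forall i, (i < k)%N -> f i = 0.

Lemma pmul_vanish f g p q : vanish f p -> vanish g q -> vanish (pmul f g) (p + q).
Proof.
move=> hf hg n hn; rewrite /pmul big1 // => i _.
case: (ltnP i p) => hi; first by rewrite hf ?mul0r.
rewrite hg ?mulr0 //.
have hi' := ltn_ord i; rewrite ltnS in hi'.
lia.
Qed.

Lemma pmul_lead f g p q : vanish f p -> vanish g q -> pmul f g (p + q)%N = f p * g q.
Proof.
move=> hf hg; rewrite /pmul.
have hp : (p < (p + q).+1)%N by lia.
rewrite (bigD1 (Ordinal hp)) //= big1 ?addr0; first by rewrite addKn.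
move=> i /eqP hi; have hi' := ltn_ord i.
case: (ltngtP i p) => h.
- by rewrite hf ?mul0r.
- by rewrite hg ?mulr0 //; lia.
- by exfalso; apply: hi; apply: val_inj.
Qed.

Lemma pcancel f f' g k : pmul f g = pmul f' g -> vanish g k -> g k != 0 -> f = f'.
Proof.
move=> e hg gk.
pose d := padd f (pscale (-1) f').
have hd : pmul d g = pzero K.
  rewrite /d pmulDl pmulZl e; apply: functional_extensionality => n.
  by rewrite /padd /pscale /pzero mulN1r addrN.
suff H : forall n, vanish d n.
  apply: functional_extensionality => n; have := H n.+1 n (ltnSn n).
  by rewrite /d /padd /pscale mulN1r => /eqP; rewrite subr_eq0 => /eqP.
elim=> [|n IH]; first by move=> i.
move=> i; rewrite ltnS leq_eqVlt => /orP [/eqP ->|]; last exact: IH.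
have := pmul_lead IH hg; rewrite hd /pzero => /esym /eqP.
by rewrite mulf_eq0 (negbTE gk) orbF => /eqP.
Qed.

Lemma span_eq gens n f : span_plus gens n f <->
  exists cs : seq K, size cs = size gens /\ forall i, (i < n)%N -> f i = lincomb cs gens i.
Proof.
split.
  case=> cs [hs [r ->]]; exists cs; split => // i hi.
  by rewrite /padd ptpowE leqNgt hi addr0.
case=> cs [hs hf]; exists cs; split => //.
exists (fun k => f (k + n)%N - lincomb cs gens (k + n)%N).
apply: functional_extensionality => k; rewrite /padd ptpowE.
case: leqP => h; first by rewrite subnK // addrC subrK.
by rewrite hf // addr0.
Qed.


Lemma pmul_eqm f f' g g' n : (forall i, (i < n)%N -> f i = f' i) ->
  (forall i, (i < n)%N -> g i = g' i) -> forall i, (i < n)%N -> pmul f g i = pmul f' g' i.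
Proof.
move=> hf hg i hi; rewrite /pmul; apply: eq_bigr => j _.
have hj := ltn_ord j; rewrite hf ?hg //; lia.
Qed.

Lemma vanish_le f m n : vanish f n -> (m <= n)%N -> vanish f m.
Proof. move=> h mn i hi; apply: h; lia. Qed.

Lemma pt_van : vanish (pt K) 1.
Proof. by case. Qed.

Lemma pt_vanish f k : vanish f k -> vanish (pmul (pt K) f) k.+1.
Proof. move=> h; exact: (pmul_vanish pt_van h). Qed.

Lemma padd_van f g k : vanish f k -> vanish g k -> vanish (padd f g) k.
Proof. by move=> hf hg i hi; rewrite /padd hf ?hg ?addr0. Qed.

Lemma pscale_van c f k : vanish f k -> vanish (pscale c f) k.
Proof. by move=> hf i hi; rewrite /pscale hf ?mulr0. Qed.

Lemma any_van f : vanish f 0.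
Proof. by []. Qed.

Lemma diff0 (l r t : K) : l = r -> t = l - r -> t = 0.
Proof. by move=> -> ->; rewrite subrr. Qed.

End Lib.
Section Main.
Variable K : fieldType.
Variables x y z : pser K.
Hypotheses (hx0 : vanish x 5) (hx5 : x 5%N != 0) (hy0 : vanish y 8) (hy8 : y 8%N != 0).
Hypotheses (hzx : pmul z x = y) (hzz : pmul z z = pmul (pt K) x).

Lemma z_van : vanish z 3.
Proof.
suff H : forall m, (m <= 3)%N -> vanish z m by exact: H.
elim=> [|m IH] hm; first exact: any_van.
have IH' := IH (ltnW hm).
move=> i; rewrite ltnS leq_eqVlt => /orP [/eqP ->|]; last exact: IH'.
have := pmul_lead IH' hx0; rewrite hzx hy0; last by lia.
move=> /esym /eqP; rewrite mulf_eq0 (negbTE hx5) orbF => /eqP //.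
Qed.

Lemma z3 : z 3%N != 0.
Proof.
have := pmul_lead z_van hx0; rewrite hzx /= => e.
by apply/negP => /eqP h; move: hy8; rewrite e h mul0r eqxx.
Qed.

Definition R a b := padd (pscale a (pmul (pt K) (pmul (pt K) x))) (pscale b (pmul (pt K) y)).
Definition W a b := padd z (R a b).

Lemma R_van a b : vanish (R a b) 7.
Proof.
apply: padd_van; apply: pscale_van.
  by do 2 apply: pt_vanish.
by apply: vanish_le (pt_vanish hy0) _.
Qed.

Lemma W_van a b : vanish (W a b) 3.
Proof. apply: padd_van; first exact: z_van. exact: vanish_le (R_van a b) _. Qed.

Lemma xW a b i : (i < 10)%N -> pmul x (W a b) i = y i.
Proof.
move=> hi; rewrite /W pmulDr pmulC hzx /padd.
by rewrite (pmul_vanish hx0 (R_van a b)) ?addr0 //; lia.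
Qed.

Lemma WW a b a' b' i : (i < 10)%N -> pmul (W a b) (W a' b') i = pmul (pt K) x i.
Proof.
move=> hi; rewrite /W (pmulDl z (R a b)) (pmulDr z (R a' b') z) (pmulDr z (R a' b') (R a b)) /padd hzz.
rewrite (pmul_vanish z_van (R_van a' b')) ?(pmul_vanish (R_van a b) z_van)
  ?(pmul_vanish (R_van a b) (R_van a' b')) ?addr0 //; lia.
Qed.

Lemma Wy_van a b : vanish (pmul (W a b) y) 11.
Proof. exact: (pmul_vanish (W_van a b) hy0). Qed.

Lemma gen_eq a b : padd z (padd (pscale a (pmul (pt K) (pmul z z))) (pscale b (pmul z (pmul z z))))
  = W a b.
Proof.
by rewrite /W /R hzz (pmulA z (pt K) x) (pmulC z (pt K)) -pmulA hzx.
Qed.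

Definition F9L a b (d0 d1 d2 d3 : K) :=
  padd (pscale d0 (pconst 1)) (padd (pscale d1 (W a b)) (padd (pscale d2 x) (pscale d3 y))).

Lemma F9E a b f : F9 x y z a b f <-> exists d0 d1 d2 d3,
  forall i, (i < 10)%N -> f i = F9L a b d0 d1 d2 d3 i.
Proof.
rewrite /F9 span_eq gen_eq; split.
  case=> cs [hs h]; case: cs hs h => [|d0 [|d1 [|d2 [|d3 [|]]]]] // _ h; exists d0, d1, d2, d3 => i hi.
  by rewrite h // /lincomb /= /F9L /padd /pscale /pzero addr0.
case=> d0 [d1 [d2 [d3 h]]]; exists [:: d0; d1; d2; d3]; split => // i hi.
by rewrite h // /lincomb /= /F9L /padd /pscale /pzero addr0.
Qed.

Definition S2L (c0 c1 c2 c3 c4 : K) :=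
  padd (pscale c0 (pconst 1)) (padd (pscale c1 x) (padd (pscale c2 y)
    (padd (pscale c3 (pmul x x)) (pscale c4 (pmul (pt K) (pmul x x)))))).

Lemma S2E f : S2 x y f <-> exists c0 c1 c2 c3 c4,
  forall i, (i < 13)%N -> f i = S2L c0 c1 c2 c3 c4 i.
Proof.
rewrite /S2 span_eq; split.
  case=> cs [hs h]; case: cs hs h => [|c0 [|c1 [|c2 [|c3 [|c4 [|]]]]]] // _ h; exists c0, c1, c2, c3, c4 => i hi.
  by rewrite h // /lincomb /= /S2L /padd /pscale /pzero addr0.
case=> c0 [c1 [c2 [c3 [c4 h]]]]; exists [:: c0; c1; c2; c3; c4]; split => // i hi.
by rewrite h // /lincomb /= /S2L /padd /pscale /pzero addr0.
Qed.


Lemma part1 a b : is_submodule (S2 x y) (F9 x y z a b).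
Proof.
split; [|split].
- apply/F9E; exists 0, 0, 0, 0 => i _; rewrite /F9L /padd /pscale /pzero; ring.
- move=> f g /F9E [d0 [d1 [d2 [d3 hf]]]] /F9E [e0 [e1 [e2 [e3 hg]]]].
  apply/F9E; exists (d0 + e0), (d1 + e1), (d2 + e2), (d3 + e3) => i hi.
  have -> : padd f g i = f i + g i by [].
  rewrite hf // hg // /F9L /padd /pscale /=; ring.
move=> s m /S2E [c0 [c1 [c2 [c3 [c4 hs]]]]] /F9E [d0 [d1 [d2 [d3 hm]]]].
apply/F9E; exists (c0 * d0), (c0 * d1), (c0 * d2 + c1 * d0), (c0 * d3 + c1 * d1 + c2 * d0).
move=> i hi.
rewrite (@pmul_eqm _ _ (S2L c0 c1 c2 c3 c4) _ (F9L a b d0 d1 d2 d3) 10) //; last first.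
  by move=> j hj; apply: hs; lia.
have vxx : vanish (pmul x x) 10 := pmul_vanish hx0 hx0.
have vtxx : vanish (pmul (pt K) (pmul x x)) 10 := vanish_le (pt_vanish vxx) (leqnSn _).
have A f : pmul (pmul x x) f i = 0 by apply: (pmul_vanish vxx (any_van f)).
have B f : pmul (pmul (pt K) (pmul x x)) f i = 0 by apply: (pmul_vanish vtxx (any_van f)).
have C1 : pmul x x i = 0 by apply: vxx.
have C2 : pmul (pt K) (pmul x x) i = 0 by apply: vtxx.
have C3 : pmul x y i = 0 by apply: (pmul_vanish hx0 hy0); lia.
have C4 : pmul y x i = 0 by apply: (pmul_vanish hy0 hx0); lia.
have C5 : pmul y y i = 0 by apply: (pmul_vanish hy0 hy0); lia.
have C6 : pmul y (W a b) i = 0 by rewrite pmulC; apply: Wy_van; lia.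
have C7 := xW a b hi.
rewrite /S2L /F9L.
move: (W a b) C6 C7 => Wv C6 C7.
rewrite !(pmulDl, pmulDr, pmulZl, pmulZr, pmul1l, pmul1r) /padd /pscale /=.
rewrite !A !B C1 C2 C3 C4 C5 C6 C7; ring.
Qed.


Lemma mul0_r (p q : K) : p * q = 0 -> q != 0 -> p = 0.
Proof. by move=> /eqP; rewrite mulf_eq0 => /orP [/eqP //|/eqP ->]; rewrite eqxx. Qed.

Lemma one_F9 a b : F9 x y z a b (pconst 1).
Proof. apply/F9E; exists 1, 0, 0, 0 => i _; rewrite /F9L /padd /pscale; ring. Qed.

Lemma t13_S2 f : S2 x y (pmul (ptpow K 13) f).
Proof.
apply/S2E; exists 0, 0, 0, 0, 0 => i hi; rewrite ptpowE leqNgt hi /S2L /padd /pscale; ring.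
Qed.

Lemma part2 a b a' b' : module_iso (S2 x y) (F9 x y z a b) (F9 x y z a' b') -> (a, b) = (a', b').
Proof.
case=> phi [P1 [_ [P3 [_ P5]]]].
pose u := phi (pconst 1).
have Hphi m : F9 x y z a b m -> phi m = pmul m u.
  move=> hm.
  have e1 := P3 _ _ (t13_S2 m) (one_F9 a b).
  rewrite pmul1r in e1.
  have e2 : S2 x y (ptpow K 13).
    apply/S2E; exists 0, 0, 0, 0, 0 => i hi; rewrite /S2L /padd /pscale /ptpow.
    rewrite (ltn_eqF hi); ring.
  have e3 := P3 _ _ e2 hm.
  rewrite e3 -pmulA in e1.
  apply: functional_extensionality => n.
  by have := congr1 (fun f => f (n + 13)%N) e1; rewrite /= !ptpowE leq_addl addnK.
have Hu : F9 x y z a' b' u := P1 _ (one_F9 a b).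
have u0 : u 0%N != 0.
  have [m [hm e]] := P5 _ (one_F9 a' b').
  rewrite Hphi // in e.
  have := congr1 (fun f => f 0%N) e; rewrite /= /pmul big_ord1 /pconst /= => e'.
  by apply/negP => /eqP h; move: e'; rewrite h mulr0 => /eqP; rewrite eq_sym oner_eq0.
have HW : F9 x y z a' b' (pmul (W a b) u).
  have hW : F9 x y z a b (W a b).
    apply/F9E; exists 0, 1, 0, 0 => i _; rewrite /F9L /padd /pscale; ring.
  by rewrite -Hphi //; apply: P1.
move/F9E: Hu => [c0 [c1 [c2 [c3 hu]]]].
move/F9E: HW => [d0 [d1 [d2 [d3 hw]]]].
have E i : (i < 10)%N -> c0 * W a b i + c1 * pmul (pt K) x i + c2 * y i
   = F9L a' b' d0 d1 d2 d3 i.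
  move=> hi; rewrite -hw //.
  transitivity (pmul (W a b) (F9L a' b' c0 c1 c2 c3) i); last first.
    by symmetry; apply: (@pmul_eqm _ _ _ _ _ 10) => // j hj; apply: hu.
  have F1 := WW a b a' b' hi.
  have F2 : pmul (W a b) x i = y i by rewrite pmulC xW.
  have F3 : pmul (W a b) y i = 0 by apply: Wy_van; lia.
  rewrite /F9L; move: (W a' b') F1 => W' F1.
  rewrite !(pmulDr, pmulZr) pmul1r /padd /pscale /=.
  rewrite F1 F2 F3; ring.
have X0 : x 0%N = 0 by apply: hx0.
have X1 : x 1%N = 0 by apply: hx0.
have X2 : x 2%N = 0 by apply: hx0.
have X3 : x 3%N = 0 by apply: hx0.
have X4 : x 4%N = 0 by apply: hx0.
have Y0 : y 0%N = 0 by apply: hy0.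
have Y1 : y 1%N = 0 by apply: hy0.
have Y2 : y 2%N = 0 by apply: hy0.
have Y3 : y 3%N = 0 by apply: hy0.
have Y4 : y 4%N = 0 by apply: hy0.
have Y5 : y 5%N = 0 by apply: hy0.
have Y6 : y 6%N = 0 by apply: hy0.
have Y7 : y 7%N = 0 by apply: hy0.
have Z0 : z 0%N = 0 by apply: z_van.
have Z1 : z 1%N = 0 by apply: z_van.
have Z2 : z 2%N = 0 by apply: z_van.
have c0n : c0 != 0.
  move: u0; rewrite hu // /F9L /padd /pscale /pconst /= (W_van a' b') // X0 Y0; by rewrite !mulr0 !addr0 mulr1.
have z3n := z3.
have E3 := E 3%N erefl; have E5 := E 5%N erefl; have E6 := E 6%N erefl.
have E7 := E 7%N erefl; have E8 := E 8%N erefl; have E9 := E 9%N erefl.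
rewrite /F9L /W /R /padd /pscale /pconst /= !ptE /= ?ptE /= ?X0 ?X1 ?X2 ?X3 ?X4 ?Y0 ?Y1 ?Y2 ?Y3 ?Y4 ?Y5 ?Y6 ?Y7 ?Z0 ?Z1 ?Z2 in E3 E5 E6 E7 E8 E9.
have h3 : (c0 - d1) * z 3%N = 0 by apply: (diff0 E3); ring.
have hd1 : c0 = d1 by apply/eqP; rewrite -subr_eq0; apply/eqP; apply: (mul0_r h3).
subst d1.
have h5 : d2 * x 5%N = 0 by apply: (diff0 (esym E5)); ring.
have hd2 := mul0_r h5 hx5; subst d2.
have h6 : c1 * x 5%N = 0 by apply: (diff0 E6); ring.
have hc1 := mul0_r h6 hx5; subst c1.
have h7 : (c0 * (a - a')) * x 5%N = 0 by apply: (diff0 E7); ring.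
have ha : a = a'.
  move: (mul0_r h7 hx5) => /eqP; rewrite mulf_eq0 (negbTE c0n) /= subr_eq0 => /eqP //.
subst a'.
have h8 : (c2 - d3) * y 8%N = 0 by apply: (diff0 E8); ring.
have hd3 : c2 = d3 by apply/eqP; rewrite -subr_eq0; apply/eqP; apply: (mul0_r h8).
subst d3.
have h9 : (c0 * (b - b')) * y 8%N = 0 by apply: (diff0 E9); ring.
move: (mul0_r h9 hy8) => /eqP; rewrite mulf_eq0 (negbTE c0n) /= subr_eq0 => /eqP -> //.
Qed.

End Main.

Theorem mainTheorem2 (K : closedFieldType) (x y z : pser K)
  (hx : val_eq x 5) (hy : val_eq y 8)
  (ht : pmul y y = pmul (pt K) (pmul x (pmul x x)))   (* t = y^2 / x^3 *)
  (hz : pmul z x = y) :                                (* z = y / x *)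
  (forall a b : K, a != 0 -> is_submodule (S2 x y) (F9 x y z a b)) /\
  (forall a b a' b' : K, a != 0 -> a' != 0 ->
     module_iso (S2 x y) (F9 x y z a b) (F9 x y z a' b') ->
     (a, b) = (a', b')).
Proof.
case: hx => hx0 hx5; case: hy => hy0 hy8.
have hzz : pmul z z = pmul (pt K) x.
  apply: (@pcancel _ _ _ (pmul x x) 10).
  - have -> : pmul (pmul z z) (pmul x x) = pmul y y.
      rewrite -hz -!pmulA; congr (pmul z _).
      by rewrite pmulA [RHS]pmulC.
    by rewrite ht pmulA.
  - exact: (pmul_vanish hx0 hx0).
  - by rewrite (pmul_lead hx0 hx0) mulf_neq0.
split.
  by move=> a b _; apply: (part1 hx0 hx5 hy0 hy8 hz hzz).
by move=> a b a' b' _ _; apply: (part2 hx0 hx5 hy0 hy8 hz hzz).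
Qed.
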